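(* Let $\Bbbk$ be a commutative ring, let $A$ be a flat noetherian $\Bbbk$-algebra, and let $\mathfrak a\subseteq A$ be an ideal. Let $I:=\mathfrak a\otimes_\Bbbk A+A\otimes_\Bbbk\mathfrak a\subseteq A\otimes_\Bbbk A$, let $\widehat A=\Lambda_{\mathfrak a}(A)$ with completion map $\tau_A:A\to\widehat A$, let $\widehat{\mathfrak a}:=\mathfrak a\widehat A$, and let $J:=\widehat{\mathfrak a}\otimes_\Bbbk\widehat A+\widehat A\otimes_\Bbbk\widehat{\mathfrak a}=I\cdot(\widehat A\otimes_\Bbbk\widehat A)\subseteq\widehat A\otimes_\Bbbk\widehat A$. Then the induced ring homomorphism \[ \Lambda_I(\tau_A\otimes_\Bbbk\tau_A):\Lambda_I(A\otimes_\Bbbk A)\to\Lambda_J(\widehat A\otimes_\Bbbk\widehat A) \] is an isomorphism.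
   Context: All rings are commutative and unital. For an ideal $\mathfrak c$ of a ring $R$ and an $R$-module $M$, $\Lambda_{\mathfrak c}(M)=\varprojlim_n R/\mathfrak c^n\otimes_RM$. $I$ denotes the ideal generated by $\mathfrak a\otimes1$ and $1\otimes\mathfrak a$, similarly for $J$. *)

(* Defs.v *)
From HB Require Import structures.
From mathcomp Require Import all_boot all_order all_algebra.
Set Implicit Arguments. Unset Strict Implicit. Unset Printing Implicit Defensive.
Import GRing.Theory.
Local Open Scope ring_scope.

Definition is_ideal (T : comPzRingType) (S : T -> Prop) : Prop :=
  S 0 /\ (forall x y, S x -> S y -> S (x + y)) /\ (forall r x, S x -> S (r * x)).

Definition gen_ideal (T : comPzRingType) (S : T -> Prop) : T -> Prop :=
  fun x => exists s : seq (T * T),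
    (forall p, p \in s -> S p.2) /\ x = \sum_(p <- s) p.1 * p.2.

Fixpoint idpow (T : comPzRingType) (I : T -> Prop) (n : nat) : T -> Prop :=
  match n with
  | 0 => fun _ => True
  | n'.+1 => gen_ideal (fun z => exists x y, idpow I n' x /\ I y /\ z = x * y)
  end.

Definition noetherian (T : comPzRingType) : Prop :=
  forall F : nat -> T -> Prop, (forall n, is_ideal (F n)) ->
    (forall n x, F n x -> F n.+1 x) ->
    exists N, forall n, (N <= n)%N -> forall x, F n x -> F N x.

Definition klin (k : pzRingType) (M N : lmodType k) (f : M -> N) : Prop :=
  forall r x y, f (r *: x + y) = r *: f x + f y.

Definition kbilin (k A : comPzRingType) (iota : k -> A) (M T : lmodType k)
  (b : M -> A -> T) : Prop :=
  (forall m m' a, b (m + m') a = b m a + b m' a) /\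
  (forall m a a', b m (a + a') = b m a + b m a') /\
  (forall r m a, b (r *: m) a = r *: b m a) /\
  (forall r m a, b m (iota r * a) = r *: b m a).

Definition is_tensor (k A : comPzRingType) (iota : k -> A) (M T : lmodType k)
  (b : M -> A -> T) : Prop :=
  kbilin iota b /\
  forall (Q : lmodType k) (g : M -> A -> Q), kbilin iota g ->
    exists h : T -> Q, klin h /\ (forall m a, h (b m a) = g m a) /\
      forall h' : T -> Q, klin h' -> (forall m a, h' (b m a) = g m a) ->
        forall t, h' t = h t.

Definition flat (k A : comPzRingType) (iota : k -> A) : Prop :=
  forall (M N : lmodType k) (u : M -> N), klin u -> injective u ->
  forall (TM TN : lmodType k) (bM : M -> A -> TM) (bN : N -> A -> TN),
    is_tensor iota bM -> is_tensor iota bN ->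
    forall h : TM -> TN, klin h -> (forall m a, h (bM m a) = bN (u m) a) ->
      injective h.

(* (P, j1, j2) is the tensor product B (x)_k C of commutative k-algebras
   (k-algebra structures given by iB, iC), i.e. the pushout of commutative
   rings / coproduct of commutative k-algebras. *)
Definition is_tensor_alg (k B C P : comPzRingType) (iB : k -> B) (iC : k -> C)
  (j1 : {rmorphism B -> P}) (j2 : {rmorphism C -> P}) : Prop :=
  (forall r, j1 (iB r) = j2 (iC r)) /\
  forall (Q : comPzRingType) (f : {rmorphism B -> Q}) (g : {rmorphism C -> Q}),
    (forall r, f (iB r) = g (iC r)) ->
    exists h : {rmorphism P -> Q},
      (forall b, h (j1 b) = f b) /\ (forall c, h (j2 c) = g c) /\
      forall h' : {rmorphism P -> Q},
        (forall b, h' (j1 b) = f b) -> (forall c, h' (j2 c) = g c) ->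
        forall x, h' x = h x.

(* Elements of Lambda_I(T) = lim_n T/I^n T are represented by compatible
   sequences c (c (n+1) = c n mod I^n), modulo the relation c ~ d iff
   c n = d n mod I^n for all n. *)
Definition compat (T : comPzRingType) (I : T -> Prop) (c : nat -> T) : Prop :=
  forall n, idpow I n (c n.+1 - c n).

Definition lim_eq (T : comPzRingType) (I : T -> Prop) (c d : nat -> T) : Prop :=
  forall n, idpow I n (c n - d n).

(* (Ahat, tau) is the a-adic completion Lambda_a(A) with its completion map:
   there is a ring isomorphism phi : Ahat -> lim_n A/a^n such that
   phi o tau is the canonical map A -> lim_n A/a^n. *)
Definition is_completion (A Ahat : comPzRingType) (a : A -> Prop)
  (tau : {rmorphism A -> Ahat}) : Prop :=
  exists phi : Ahat -> nat -> A,
    (forall y, compat a (phi y)) /\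
    (forall y y', lim_eq a (phi (y + y')) (fun n => phi y n + phi y' n)) /\
    (forall y y', lim_eq a (phi (y * y')) (fun n => phi y n * phi y' n)) /\
    lim_eq a (phi 1) (fun _ => 1) /\
    (forall y y', lim_eq a (phi y) (phi y') -> y = y') /\
    (forall c, compat a c -> exists y, lim_eq a (phi y) c) /\
    (forall x, lim_eq a (phi (tau x)) (fun _ => x)).

(* Lambda_I(h) : Lambda_I(T) -> Lambda_J(T'), [c] |-> [h o c], is bijective
   (equivalently, being a ring map, an isomorphism). *)
Definition lambda_iso (T T' : comPzRingType) (I : T -> Prop) (J : T' -> Prop)
  (h : T -> T') : Prop :=
  (forall c d, compat I c -> compat I d ->
     lim_eq J (fun n => h (c n)) (fun n => h (d n)) -> lim_eq I c d) /\
  (forall e, compat J e -> exists c, compat I c /\ lim_eq J (fun n => h (c n)) e).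

(* Main.v *)
Require Import Defs.
From HB Require Import structures.
From mathcomp Require Import all_boot all_order all_algebra.
From mathcomp Require Import ring.
From Stdlib Require Import Classical ClassicalEpsilon FunctionalExtensionality PropExtensionality.
Set Implicit Arguments. Unset Strict Implicit. Unset Printing Implicit Defensive.
Import GRing.Theory.
Local Open Scope ring_scope.

Lemma mk_rmorph (R S : comPzRingType) (f : R -> S) :
  zmod_morphism f -> monoid_morphism f -> exists g : {rmorphism R -> S}, forall x, g x = f x.
Proof.
move=> H1 H2.
pose g : {rmorphism R -> S} := HB.pack f (GRing.isZmodMorphism.Build R S f H1) (GRing.isMonoidMorphism.Build R S f H2).
by exists g.
Qed.

Section IdealFacts.
Variables (T : comPzRingType) (P : T -> Prop) (Pid : is_ideal P).
Lemma id0 : P 0. Proof. by case: Pid. Qed.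
Lemma idD x y : P x -> P y -> P (x + y). Proof. by case: Pid => _ [H _]; apply: H. Qed.
Lemma idM r x : P x -> P (r * x). Proof. by case: Pid => _ [_ H]; apply: H. Qed.
Lemma idMr r x : P x -> P (x * r). Proof. by rewrite mulrC; apply: idM. Qed.
Lemma idN x : P x -> P (- x). Proof. by move=> Px; rewrite -mulN1r; apply: idM. Qed.
Lemma idB x y : P x -> P y -> P (x - y). Proof. by move=> Px Py; apply: idD => //; apply: idN. Qed.
Lemma idNE x : P (- x) -> P x. Proof. by move=> /idN; rewrite opprK. Qed.
Lemma idsum (I : Type) (s : seq I) (F : I -> T) : (forall i, P (F i)) -> P (\sum_(i <- s) F i).
Proof.
move=> H; elim: s => [|i s IH]; first by rewrite big_nil; apply: id0.
by rewrite big_cons; apply: idD.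
Qed.
Lemma idcongD x y x' y' : P (x - x') -> P (y - y') -> P (x + y - (x' + y')).
Proof. by move=> H1 H2; rewrite opprD addrACA; apply: idD. Qed.
Lemma idcongM x y x' y' : P (x - x') -> P (y - y') -> P (x * y - x' * y').
Proof.
move=> H1 H2.
have -> : x * y - x' * y' = (x - x') * y + x' * (y - y').
  by rewrite mulrBl mulrBr addrA subrK.
by apply: idD; [apply: idMr|apply: idM].
Qed.
Lemma idcongT x y z : P (x - y) -> P (y - z) -> P (x - z).
Proof. by move=> H1 H2; rewrite -(subrK y x) -addrA; apply: idD. Qed.
Lemma idcongS x y : P (x - y) -> P (y - x).
Proof. by move=> H; rewrite -opprB; apply: idN. Qed.
End IdealFacts.

Section Quot.
Variables (T : comPzRingType) (P : T -> Prop).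

Definition rep (x : T) : T := epsilon (inhabits x) (fun z => P (x - z)).

Definition quot (Pid : is_ideal P) := {x : T | rep x == x}.
Variable Pid : is_ideal P.
HB.instance Definition _ := Choice.on (quot Pid).

Lemma rep_spec x : P (x - rep x).
Proof. apply: (epsilon_spec (inhabits x) (fun z => P (x - z))); exists x; rewrite subrr; exact: id0. Qed.

Lemma rep_eq x y : P (x - y) -> rep x = rep y.
Proof.
move=> H; rewrite /rep.
have -> : (fun z => P (x - z)) = (fun z => P (y - z)).
  apply: functional_extensionality => z; apply: propositional_extensionality; split => Hz.
    have -> : y - z = (x - z) - (x - y) by ring.
    exact: idB.
  have -> : x - z = (y - z) + (x - y) by ring.
  exact: idD.
by rewrite (proof_irrelevance _ (inhabits x) (inhabits y)).
Qed.

Lemma rep_idem x : rep (rep x) = rep x.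
Proof. apply: rep_eq; apply: idcongS => //; exact: rep_spec. Qed.

Definition mk (z : T) : quot Pid := exist _ (rep z) (introT eqP (rep_idem z)).
Lemma mkK (q : quot Pid) : mk (val q) = q.
Proof. apply: val_inj => /=; exact: (eqP (valP q)). Qed.
Lemma mk_eq x y : P (x - y) -> mk x = mk y.
Proof. by move=> H; apply: val_inj => /=; apply: rep_eq. Qed.
Lemma mk_eqP x y : mk x = mk y -> P (x - y).
Proof.
move=> /(congr1 val) /= E.
apply: (idcongT Pid (rep_spec x)); rewrite E; apply: idcongS => //; exact: rep_spec.
Qed.

Definition qadd (q r : quot Pid) := mk (val q + val r).
Definition qopp (q : quot Pid) := mk (- val q).
Definition qmul (q r : quot Pid) := mk (val q * val r).
Definition qzero := mk 0.
Definition qone := mk 1.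

Lemma val_mk x : P (val (mk x) - x).
Proof. by apply: idcongS => //; apply: rep_spec. Qed.

Lemma qaddE x y : qadd (mk x) (mk y) = mk (x + y).
Proof. by apply: mk_eq; apply: idcongD => //; apply: val_mk. Qed.
Lemma qmulE x y : qmul (mk x) (mk y) = mk (x * y).
Proof. by apply: mk_eq; apply: idcongM => //; apply: val_mk. Qed.
Lemma qoppE x : qopp (mk x) = mk (- x).
Proof. by apply: mk_eq; rewrite -opprD; apply: idN => //; apply: val_mk. Qed.

Lemma qaddA : associative qadd.
Proof. by move=> q r s; rewrite -[q]mkK -[r]mkK -[s]mkK !qaddE addrA. Qed.
Lemma qaddC : commutative qadd.
Proof. by move=> q r; rewrite -[q]mkK -[r]mkK !qaddE addrC. Qed.
Lemma qadd0 : left_id qzero qadd.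
Proof. by move=> q; rewrite -[q]mkK /qzero qaddE add0r. Qed.
Lemma qaddN : left_inverse qzero qopp qadd.
Proof. by move=> q; rewrite -[q]mkK qoppE qaddE addNr. Qed.
HB.instance Definition _ := GRing.isZmodule.Build (quot Pid) qaddA qaddC qadd0 qaddN.
Lemma qmulA : associative qmul.
Proof. by move=> q r s; rewrite -[q]mkK -[r]mkK -[s]mkK !qmulE mulrA. Qed.
Lemma qmulC : commutative qmul.
Proof. by move=> q r; rewrite -[q]mkK -[r]mkK !qmulE mulrC. Qed.
Lemma qmul1 : left_id qone qmul.
Proof. by move=> q; rewrite -[q]mkK /qone qmulE mul1r. Qed.
Lemma qaddE2 x y : mk x + mk y = mk (x + y) :> quot Pid.
Proof. exact: qaddE. Qed.
Lemma qmulD : left_distributive qmul (@GRing.add (quot Pid)).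
Proof.
move=> q r s; rewrite -[q]mkK -[r]mkK -[s]mkK.
by rewrite qaddE2 !qmulE qaddE2 mulrDl.
Qed.
HB.instance Definition _ := GRing.Zmodule_isComPzRing.Build (quot Pid) qmulA qmulC qmul1 qmulD.

Lemma mk_rm : exists pi : {rmorphism T -> quot Pid}, forall x, pi x = mk x.
Proof.
apply: mk_rmorph.
  move=> x y; have -> : - mk y = mk (- y) :> quot Pid by exact: qoppE.
  by rewrite qaddE2.
by split => // x y; have -> : mk x * mk y = mk (x * y) :> quot Pid by exact: qmulE.
Qed.

Lemma mk0 x : mk x = 0 <-> P x.
Proof.
split; first by move/mk_eqP; rewrite subr0.
by move=> H; apply: mk_eq; rewrite subr0.
Qed.

End Quot.

Section GenIdeal.
Variables (T : comPzRingType).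
Implicit Types (S P : T -> Prop).

Lemma gen_is_ideal S : is_ideal (gen_ideal S).
Proof.
split; first by exists [::]; rewrite big_nil.
split.
  move=> x y [s [Hs ->]] [s' [Hs' ->]]; exists (s ++ s'); split; last by rewrite big_cat.
  by move=> p; rewrite mem_cat => /orP [] ?; [apply: Hs|apply: Hs'].
move=> r x [s [Hs ->]]; exists (map (fun p => (r * p.1, p.2)) s); split.
  by move=> p /mapP [p' p's ->]; exact: (Hs p' p's).
by rewrite big_map mulr_sumr; apply: eq_bigr => p _; rewrite mulrA.
Qed.

Lemma gen_sub S x : S x -> gen_ideal S x.
Proof.
move=> Sx; exists [:: (1, x)]; split; last by rewrite big_cons big_nil mul1r addr0.
by move=> p; rewrite inE => /eqP ->.
Qed.

Lemma gen_min S P : is_ideal P -> (forall x, S x -> P x) -> forall x, gen_ideal S x -> P x.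
Proof.
move=> Pid SP x [s [Hs ->]]; elim: s Hs => [|p s IH] Hs; first by rewrite big_nil; apply: id0.
rewrite big_cons; apply: (idD Pid); first by apply: (idM Pid); apply: SP; apply: Hs; rewrite inE eqxx.
by apply: IH => p' p's; apply: Hs; rewrite inE p's orbT.
Qed.

Lemma idpow_ideal S n : is_ideal (idpow S n).
Proof.
case: n => [|n] /=; last exact: gen_is_ideal.
by split => //.
Qed.

Lemma idpowS S n x y : idpow S n x -> S y -> idpow S n.+1 (x * y).
Proof. by move=> Hx Hy; apply: gen_sub; exists x, y. Qed.

Lemma idpow_dec S n x : idpow S n.+1 x -> idpow S n x.
Proof.
apply: gen_min; first exact: idpow_ideal.
by move=> z [u [v [Hu [_ ->]]]]; apply: (idMr (idpow_ideal S n)).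
Qed.

Lemma idpow_mono S m n x : (m <= n)%N -> idpow S n x -> idpow S m x.
Proof.
move=> /subnKC <-; elim: (n - m)%N => [|k IH]; first by rewrite addn0.
by rewrite addnS => /idpow_dec.
Qed.

Lemma preim_ideal (T' : comPzRingType) (f : {rmorphism T -> T'}) (P : T' -> Prop) :
  is_ideal P -> is_ideal (fun x => P (f x)).
Proof.
move=> Pid; split; first by rewrite rmorph0; apply: id0.
split; first by move=> x y Hx Hy; rewrite rmorphD; apply: idD.
by move=> r x Hx; rewrite rmorphM; apply: idM.
Qed.

Lemma compat_tele S c : compat S c -> forall m k, idpow S m (c (m + k)%N - c m).
Proof.
move=> Hc m; elim=> [|k IH]; first by rewrite addn0 subrr; apply: id0; apply: idpow_ideal.
rewrite addnS -(subrK (c (m + k)%N) (c _)) -addrA; apply: (idD (idpow_ideal S m)) => //.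
apply: (idpow_mono (m:=m) (n:=(m+k)%N)); first exact: leq_addr.
exact: Hc.
Qed.

Definition span (g : nat -> T) (r : nat) (x : T) :=
  exists t : nat -> T, x = \sum_(i < r) t i * g i.

Lemma span_ideal g r : is_ideal (span g r).
Proof.
split; first by exists (fun _ => 0); rewrite big1 // => i _; rewrite mul0r.
split.
  move=> x y [t ->] [t' ->]; exists (fun i => t i + t' i).
  by rewrite -big_split; apply: eq_bigr => i _; rewrite mulrDl.
move=> c x [t ->]; exists (fun i => c * t i).
by rewrite mulr_sumr; apply: eq_bigr => i _; rewrite mulrA.
Qed.

Lemma noeth_fg P : noetherian T -> is_ideal P ->
  exists r (g : nat -> T), (forall i, P (g i)) /\ forall x, P x -> span g r x.
Proof.
move=> noeth Pid.
pose pick (G : nat -> T) (k : nat) := epsilon (inhabits 0)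
  (fun x => P x /\ (~ span G k x \/ forall y, P y -> span G k y)).
have pickP G k : P (pick G k) /\ (~ span G k (pick G k) \/ forall y, P y -> span G k y).
  apply: (epsilon_spec (inhabits 0) (fun x => P x /\ (~ span G k x \/ forall y, P y -> span G k y))).
  case: (classic (exists x, P x /\ ~ span G k x)) => [[x [Px Nx]]|N].
    by exists x; split => //; left.
  exists 0; split; first exact: id0.
  right => y Py; apply: NNPP => Ny; apply: N; by exists y.
pose G := fix G (k : nat) : nat -> T :=
  match k with 0 => fun _ => 0 | k'.+1 => fun i => if i == k' then pick (G k') k' else G k' i end.
have GP k i : P (G k i).
  elim: k i => [|k IH] i /=; first exact: id0.
  by case: (i == k) => //; case: (pickP (G k) k).
have Gs k i : (i < k)%N -> G k.+1 i = G k i by move=> ik /=; rewrite (ltn_eqF ik).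
have Fmono k x : span (G k) k x -> span (G k.+1) k.+1 x.
  move=> [t ->]; exists (fun i => if i == k then 0 else t i).
  rewrite big_ord_recr /= eqxx mul0r addr0; apply: eq_bigr => i _.
  by rewrite (ltn_eqF (ltn_ord i)) ?Gs.
have [N HN] := noeth (fun k => span (G k) k) (fun k => span_ideal (G k) k) Fmono.
exists N, (G N); split => //.
have : span (G N.+1) N.+1 (pick (G N) N).
  exists (fun i => if i == N then 1 else 0).
  rewrite big_ord_recr /= !eqxx mul1r big1 ?add0r // => i _.
  by rewrite (ltn_eqF (ltn_ord i)) mul0r.
move=> /(HN N.+1 (leqnSn N)) Hs.
by case: (pickP (G N) N) => _ [].
Qed.

End GenIdeal.

Lemma idpow_morph (T T' : comPzRingType) (f : {rmorphism T -> T'}) (S : T -> Prop) (S' : T' -> Prop) :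
  (forall x, S x -> S' (f x)) -> forall n x, idpow S n x -> idpow S' n (f x).
Proof.
move=> SS; elim=> [//|n IH] x /=.
move=> Hx; apply: (gen_min (P := fun y => idpow S' n.+1 (f y))) Hx.
  exact: (preim_ideal f (idpow_ideal S' n.+1)).
move=> z [u [v [Hu [Hv ->]]]]; rewrite rmorphM; apply: idpowS; first exact: IH.
exact: SS.
Qed.


Lemma mk_rm_of (R T : comPzRingType) (P : T -> Prop) (Pid : is_ideal P) (F : R -> T) :
  (forall x y, P (F (x - y) - (F x - F y))) -> P (F 1 - 1) ->
  (forall x y, P (F (x * y) - F x * F y)) ->
  exists g : {rmorphism R -> quot Pid}, forall x, g x = mk Pid (F x).
Proof.
move=> HB H1 HM; have [pi piE] := mk_rm Pid.
apply: mk_rmorph.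
  by move=> x y; rewrite -!piE -rmorphB !piE; apply: mk_eq.
split; first by rewrite -[1 in RHS](rmorph1 pi) piE; apply: mk_eq.
by move=> x y; rewrite -!piE -rmorphM !piE; apply: mk_eq.
Qed.

Lemma img_ideal (R T : comPzRingType) (P : T -> Prop) (Pid : is_ideal P)
  (g : {rmorphism R -> quot Pid}) (P0 : T -> Prop) :
  is_ideal P0 -> is_ideal (fun z => exists w, P0 w /\ g z = mk Pid w).
Proof.
move=> P0id; have [pi piE] := mk_rm Pid.
split; first by exists 0; split; [apply: id0|rewrite rmorph0 -piE rmorph0].
split.
  move=> x y [w [Hw E]] [w' [Hw' E']]; exists (w + w'); split; first exact: idD.
  by rewrite rmorphD E E' -!piE rmorphD.
move=> r x [w [Hw E]]; exists (val (g r) * w); split; first exact: idM.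
by rewrite rmorphM E -{1}(mkK (g r)) -!piE rmorphM.
Qed.

Definition cprops (A Ahat : comPzRingType) (a : A -> Prop)
  (tau : {rmorphism A -> Ahat}) (phi : Ahat -> nat -> A) :=
    (forall y, compat a (phi y)) /\
    (forall y y', lim_eq a (phi (y + y')) (fun n => phi y n + phi y' n)) /\
    (forall y y', lim_eq a (phi (y * y')) (fun n => phi y n * phi y' n)) /\
    lim_eq a (phi 1) (fun _ => 1) /\
    (forall y y', lim_eq a (phi y) (phi y') -> y = y') /\
    (forall c, compat a c -> exists y, lim_eq a (phi y) c) /\
    (forall x, lim_eq a (phi (tau x)) (fun _ => x)).

Section PhiFacts.
Variables (A Ahat : comPzRingType) (a : A -> Prop)
  (tau : {rmorphism A -> Ahat}) (phi : Ahat -> nat -> A).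

Lemma phi0 (Hc : cprops a tau phi) n : idpow a n (phi 0 n).
Proof.
case: Hc => _ [Padd _]; have := Padd 0 0 n; rewrite /= addr0.
by rewrite opprD addrA subrr add0r => /(idNE (idpow_ideal a n)).
Qed.

Lemma phiB (Hc : cprops a tau phi) y y' n :
  idpow a n (phi (y - y') n - (phi y n - phi y' n)).
Proof.
have qid := idpow_ideal a n.
have H0 := phi0 Hc n.
have HN : idpow a n (phi (- y') n + phi y' n).
  case: Hc => _ [Padd _]; have := Padd y' (- y') n; rewrite /= subrr => H.
  have := idB qid H0 H.
  by rewrite opprD addrA subrr add0r opprK addrC.
case: Hc => _ [Padd _]; have := Padd y (- y') n => /= H.
apply: (idcongT qid H).
have -> : phi y n + phi (- y') n - (phi y n - phi y' n) = phi (- y') n + phi y' n by ring.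
exact: HN.
Qed.

Lemma phi_sum (Hc : cprops a tau phi) n r (F : nat -> Ahat) :
  idpow a n (phi (\sum_(i < r) F i) n - \sum_(i < r) phi (F i) n).
Proof.
have qid := idpow_ideal a n.
elim: r => [|r IH]; first by rewrite !big_ord0 subr0; apply: phi0.
rewrite !big_ord_recr /=.
case: Hc => _ [Padd _]; apply: (idcongT qid (Padd _ _ n)) => /=.
apply: idcongD => //; by rewrite subrr; apply: id0.
Qed.

End PhiFacts.

Lemma idcong_sum (T : comPzRingType) (P : T -> Prop) (Pid : is_ideal P) r (F G : nat -> T) :
  (forall i, P (F i - G i)) -> P (\sum_(i < r) F i - \sum_(i < r) G i).
Proof. by move=> H; rewrite -sumrB; apply: idsum. Qed.

Lemma ker_lemma (A Ahat : comPzRingType) (a : A -> Prop) (tau : {rmorphism A -> Ahat})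
  (phi : Ahat -> nat -> A) :
  noetherian A -> is_ideal a -> cprops a tau phi ->
  forall n y, idpow (gen_ideal (fun z => exists x, a x /\ z = tau x)) n (y - tau (phi y n)).
Proof.
move=> noeth ida Hc n y.
have qid m : is_ideal (idpow a m) := idpow_ideal a m.
have [Pc [Padd [Pmul [P1 [Pinj [Psurj Ptau]]]]]] := Hc.
have [r [gs [Hg Hspan]]] := noeth_fg noeth (qid n).
have DEC : forall m x, idpow a (n + m) x ->
    exists t : nat -> A, (forall i, idpow a m (t i)) /\ x = \sum_(i < r) t i * gs i.
  elim=> [|m IH] x.
    by rewrite addn0 => /Hspan [t ->]; exists t.
  rewrite addnS /= => Hx.
  apply: (gen_min (P := fun x => exists t : nat -> A, (forall i, idpow a m.+1 (t i)) /\
                          x = \sum_(i<r) t i * gs i)) Hx.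
    split.
      exists (fun _ => 0); split; first by move=> i; apply: id0.
      by rewrite big1 // => i _; rewrite mul0r.
    split.
      move=> u v [t [Ht ->]] [t' [Ht' ->]]; exists (fun i => t i + t' i); split.
        by move=> i; apply: idD.
      by rewrite -big_split; apply: eq_bigr => i _; rewrite mulrDl.
    move=> c u [t [Ht ->]]; exists (fun i => c * t i); split.
      by move=> i; apply: idM.
    by rewrite mulr_sumr; apply: eq_bigr => i _; rewrite mulrA.
  move=> z [u [v [Hu [Hv ->]]]].
  have [t [Ht ->]] := IH u Hu.
  exists (fun i => t i * v); split; first by move=> i; apply: idpowS.
  by rewrite mulr_suml; apply: eq_bigr => i _; rewrite mulrAC.
pose d := y - tau (phi y n).
have Hd0 : idpow a n (phi d n).
  rewrite -[phi d n]subr0; apply: (idcongT (qid n) (phiB Hc _ _ n)).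
  rewrite subr0; have := idN (qid n) (Ptau (phi y n) n).
  by rewrite opprB.
pose delta k := if k is k'.+1 then phi d (n + k'.+1)%N - phi d (n + k')%N else phi d n.
have Hdelta : forall k, exists t : nat -> A,
    (forall i, idpow a k.-1 (t i)) /\ delta k = \sum_(i < r) t i * gs i.
  case=> [|k] /=.
    have := DEC 0%N (phi d n); rewrite addn0; apply.
    exact: Hd0.
  by apply: DEC; rewrite addnS; apply: Pc.
pose tt k := epsilon (inhabits (fun _ : nat => 0 : A))
  (fun t => (forall i, idpow a k.-1 (t i)) /\ delta k = \sum_(i < r) t i * gs i).
have ttP k : (forall i, idpow a k.-1 (tt k i)) /\ delta k = \sum_(i < r) tt k i * gs i.
  exact: (epsilon_spec (inhabits (fun _ : nat => 0 : A))
    (fun t => (forall i, idpow a k.-1 (t i)) /\ delta k = \sum_(i < r) t i * gs i) (Hdelta k)).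
pose c (i : nat) (M : nat) := \sum_(k < M.+1) tt k i.
have cC i : compat a (c i).
  move=> M; rewrite /c big_ord_recr /= addrC addrK.
  exact: ((ttP M.+1).1 i).
have csum M : \sum_(i < r) c i M * gs i = phi d (n + M)%N.
  elim: M => [|M IH].
    have E0 : phi d n = \sum_(i<r) tt 0%N i * gs i := (ttP 0%N).2.
    rewrite addn0 E0; apply: eq_bigr => i _; by rewrite /c big_ord1.
  rewrite /c; under eq_bigr => i _ do rewrite big_ord_recr /= mulrDl.
  have EM : phi d (n + M.+1)%N - phi d (n + M)%N = \sum_(i<r) tt M.+1 i * gs i := (ttP M.+1).2.
  rewrite big_split /= IH -EM.
  by rewrite addrC subrK.
pose s i := epsilon (inhabits (0 : Ahat)) (fun z => lim_eq a (phi z) (c i)).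
have sP i : lim_eq a (phi (s i)) (c i).
  exact: (epsilon_spec (inhabits (0 : Ahat)) (fun z => lim_eq a (phi z) (c i)) (Psurj _ (cC i))).
have Hdeq : d = \sum_(i < r) s i * tau (gs i).
  apply: Pinj => M.
  have qM := qid M.
  apply: (idcongT qM (y := phi d (n + M)%N)).
    apply: idcongS => //; rewrite addnC; exact: compat_tele.
  rewrite -csum.
  apply: idcongS => //.
  apply: (idcongT qM (phi_sum Hc M r (fun i => s i * tau (gs i)))).
  apply: (@idcong_sum _ _ qM r (fun i => phi (s i * tau (gs i)) M) (fun i => c i M * gs i)) => i.
  apply: (idcongT qM (Pmul _ _ M)) => /=.
  apply: idcongM => //; first exact: sP.
  exact: Ptau.
rewrite -/d Hdeq.
apply: idsum; first exact: idpow_ideal.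
move=> i; apply: idM; first exact: idpow_ideal.
apply: (idpow_morph (S := a)); last exact: Hg.
by move=> x ax; apply: gen_sub; exists x.
Qed.

Lemma Z_lemma (A Ahat : comPzRingType) (a : A -> Prop) (tau : {rmorphism A -> Ahat})
  (phi : Ahat -> nat -> A) : is_ideal a -> cprops a tau phi -> forall n y,
  gen_ideal (fun z => exists x, a x /\ z = tau x) y -> exists w, a w /\ idpow a n (phi y n - w).
Proof.
move=> ida Hc n; have qid := idpow_ideal a n.
have [Pc [Padd [Pmul [P1 [Pinj [Psurj Ptau]]]]]] := Hc.
apply: gen_min.
  split; first by exists 0; split; [apply: id0|rewrite subr0; apply: phi0].
  split.
    move=> u v [w [Hw Hu]] [w' [Hw' Hv]]; exists (w + w'); split; first exact: idD.
    by apply: (idcongT qid (Padd _ _ n)); apply: idcongD.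
  move=> c u [w [Hw Hu]]; exists (phi c n * w); split; first exact: idM.
  apply: (idcongT qid (Pmul _ _ n)); apply: idcongM => //.
  by rewrite subrr; apply: id0.
by move=> z [x [ax ->]]; exists x; split => //; apply: Ptau.
Qed.

Lemma per_n
  (k A : comPzRingType) (iota : {rmorphism k -> A})
  (noethA : noetherian A)
  (a : A -> Prop) (ida : is_ideal a)
  (AA : comPzRingType) (j1 j2 : {rmorphism A -> AA})
  (tensAA : is_tensor_alg iota iota j1 j2)
  (Ahat : comPzRingType) (tau : {rmorphism A -> Ahat})
  (phi : Ahat -> nat -> A) (Hc : cprops a tau phi)
  (AhAh : comPzRingType) (k1 k2 : {rmorphism Ahat -> AhAh})
  (tensAhAh : is_tensor_alg (fun r => tau (iota r)) (fun r => tau (iota r)) k1 k2)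
  (h : {rmorphism AA -> AhAh})
  (h1 : forall x, h (j1 x) = k1 (tau x)) (h2 : forall x, h (j2 x) = k2 (tau x)) n :
  let I := gen_ideal (fun z => exists x, a x /\ (z = j1 x \/ z = j2 x)) in
  let ahat := gen_ideal (fun z => exists x, a x /\ z = tau x) in
  let J := gen_ideal (fun z => exists y, ahat y /\ (z = k1 y \/ z = k2 y)) in
  (forall x, idpow J n (h x) -> idpow I n x) /\ (forall z, exists x, idpow J n (z - h x)).
Proof.
move=> I ahat J.
have [Pc [Padd [Pmul [P1 [Pinj [Psurj Ptau]]]]]] := Hc.
have qid := idpow_ideal a n.
have IAid := idpow_ideal I n.
have JBid := idpow_ideal J n.
have [piI piIE] := mk_rm IAid.
have [piJ piJE] := mk_rm JBid.
have j1I x : a x -> I (j1 x) by move=> ax; apply: gen_sub; exists x; split => //; left.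
have j2I x : a x -> I (j2 x) by move=> ax; apply: gen_sub; exists x; split => //; right.
have j1q x : idpow a n x -> idpow I n (j1 x) by apply: idpow_morph.
have j2q x : idpow a n x -> idpow I n (j2 x) by apply: idpow_morph.
have tauA x : a x -> ahat (tau x) by move=> ax; apply: gen_sub; exists x.
have k1J y : ahat y -> J (k1 y) by move=> ay; apply: gen_sub; exists y; split => //; left.
have k2J y : ahat y -> J (k2 y) by move=> ay; apply: gen_sub; exists y; split => //; right.
have hIJ x : I x -> J (h x).
  apply: (gen_min (P := fun x => J (h x))); first exact: (preim_ideal h (gen_is_ideal _)).
  move=> z [x' [ax [->|->]]]; [rewrite h1; apply: k1J | rewrite h2; apply: k2J]; exact: tauA.
have hq x : idpow I n x -> idpow J n (h x) by apply: idpow_morph.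
have [g1 g1E] : exists g : {rmorphism Ahat -> quot IAid}, forall y, g y = mk IAid (j1 (phi y n)).
  apply: mk_rm_of.
  - by move=> y y'; rewrite -!rmorphB; apply: j1q; apply: phiB.
  - by rewrite -(rmorph1 j1) -rmorphB; apply: j1q; apply: P1.
  - by move=> y y'; rewrite -rmorphM -rmorphB; apply: j1q; apply: Pmul.
have [g2 g2E] : exists g : {rmorphism Ahat -> quot IAid}, forall y, g y = mk IAid (j2 (phi y n)).
  apply: mk_rm_of.
  - by move=> y y'; rewrite -!rmorphB; apply: j2q; apply: phiB.
  - by rewrite -(rmorph1 j2) -rmorphB; apply: j2q; apply: P1.
  - by move=> y y'; rewrite -rmorphM -rmorphB; apply: j2q; apply: Pmul.
have g12 r : g1 (tau (iota r)) = g2 (tau (iota r)).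
  rewrite g1E g2E; apply: mk_eq.
  apply: (idcongT IAid (y := j1 (iota r))).
    by rewrite -rmorphB; apply: j1q; apply: Ptau.
  rewrite (tensAA.1 r) -rmorphB; apply: j2q.
  by apply: idcongS => //; apply: Ptau.
have [G [G1 [G2 _]]] := tensAhAh.2 _ g1 g2 g12.
have GhE x : G (h x) = mk IAid x.
  have c12 r : (piI \o j1) (iota r) = (piI \o j2) (iota r) by rewrite /= (tensAA.1 r).
  have [H0 [_ [_ Hu]]] := tensAA.2 _ (piI \o j1) (piI \o j2) c12.
  rewrite -piIE.
  have -> : G (h x) = (G \o h) x by [].
  rewrite (Hu (G \o h)) ?(Hu piI) //.
  - by move=> y; rewrite /= h1 G1 g1E piIE; apply: mk_eq; rewrite -rmorphB; apply: j1q; apply: Ptau.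
  - by move=> y; rewrite /= h2 G2 g2E piIE; apply: mk_eq; rewrite -rmorphB; apply: j2q; apply: Ptau.
have Jgen z : J z -> exists w, I w /\ G z = mk IAid w.
  apply: (gen_min (P := fun z => exists w, I w /\ G z = mk IAid w)).
    exact: (img_ideal G (gen_is_ideal _)).
  move=> z' [y [ay [->|->]]].
    have [w [aw Hw]] := Z_lemma ida Hc n ay.
    exists (j1 w); split; first exact: j1I.
    by rewrite G1 g1E; apply: mk_eq; rewrite -rmorphB; apply: j1q.
  have [w [aw Hw]] := Z_lemma ida Hc n ay.
  exists (j2 w); split; first exact: j2I.
  by rewrite G2 g2E; apply: mk_eq; rewrite -rmorphB; apply: j2q.
have JBm : forall m z, idpow J m z -> exists w, idpow I m w /\ G z = mk IAid w.
  elim=> [|m IH] z.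
    by move=> _; exists (val (G z)); split => //; rewrite mkK.
  move=> /= Hz.
  apply: (gen_min (P := fun z => exists w, idpow I m.+1 w /\ G z = mk IAid w)) Hz.
    exact: (img_ideal G (idpow_ideal I m.+1)).
  move=> z' [x [y [Hx [Hy ->]]]].
  have [w [Hw Ew]] := IH x Hx.
  have [w' [Hw' Ew']] := Jgen y Hy.
  exists (w * w'); split; first exact: idpowS.
  by rewrite rmorphM Ew Ew' -!piIE rmorphM.
split.
  move=> x /(JBm n) [w [Hw E]].
  rewrite GhE in E; have := mk_eqP E => Hxw.
  by rewrite -(subrK w x); apply: idD.
have [h' h'E] : exists g : {rmorphism quot IAid -> quot JBid}, forall q, g q = mk JBid (h (val q)).
  have vB (u v : quot IAid) : idpow I n (val (u - v) - (val u - val v)).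
    by rewrite -{1}(mkK u) -{1}(mkK v) -!piIE -rmorphB piIE; apply: val_mk.
  apply: mk_rm_of.
  - by move=> u v; rewrite -!rmorphB; apply: hq; apply: vB.
  - rewrite -(rmorph1 h) -rmorphB; apply: hq.
    by rewrite -(rmorph1 piI) piIE; apply: val_mk.
  - move=> u v; rewrite -rmorphM -rmorphB; apply: hq.
    by rewrite -{1}(mkK u) -{1}(mkK v) -!piIE -rmorphM piIE; apply: val_mk.
have h'mk x : h' (mk IAid x) = mk JBid (h x).
  by rewrite h'E; apply: mk_eq; rewrite -rmorphB; apply: hq; apply: val_mk.
have k1q x : idpow ahat n x -> idpow J n (k1 x) by apply: idpow_morph.
have k2q x : idpow ahat n x -> idpow J n (k2 x) by apply: idpow_morph.
have HG z : h' (G z) = mk JBid z.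
  have c12 r : (piJ \o k1) (tau (iota r)) = (piJ \o k2) (tau (iota r)) by rewrite /= (tensAhAh.1 r).
  have [H0 [_ [_ Hu]]] := tensAhAh.2 _ (piJ \o k1) (piJ \o k2) c12.
  rewrite -piJE.
  have -> : h' (G z) = (h' \o G) z by [].
  rewrite (Hu (h' \o G)) ?(Hu piJ) //.
  - move=> y; rewrite /= G1 g1E h'mk h1 piJE; apply: mk_eq.
    rewrite -rmorphB; apply: k1q; apply: idcongS; first exact: idpow_ideal.
    exact: (ker_lemma noethA ida Hc).
  - move=> y; rewrite /= G2 g2E h'mk h2 piJE; apply: mk_eq.
    rewrite -rmorphB; apply: k2q; apply: idcongS; first exact: idpow_ideal.
    exact: (ker_lemma noethA ida Hc).
move=> z; exists (val (G z)).
apply: mk_eqP; rewrite -HG -{1}(mkK (G z)) h'mk //.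
Qed.

Unset Implicit Arguments.

Theorem lemma4p6
  (k A : comPzRingType) (iota : {rmorphism k -> A})
  (flatA : flat iota) (noethA : noetherian A)
  (a : A -> Prop) (ida : is_ideal a)
  (AA : comPzRingType) (j1 j2 : {rmorphism A -> AA})
  (tensAA : is_tensor_alg iota iota j1 j2)
  (Ahat : comPzRingType) (tau : {rmorphism A -> Ahat})
  (complA : is_completion a tau)
  (AhAh : comPzRingType) (k1 k2 : {rmorphism Ahat -> AhAh})
  (tensAhAh : is_tensor_alg (fun r => tau (iota r)) (fun r => tau (iota r)) k1 k2)
  (h : {rmorphism AA -> AhAh})
  (h1 : forall x, h (j1 x) = k1 (tau x)) (h2 : forall x, h (j2 x) = k2 (tau x)) :
  let I := gen_ideal (fun z => exists x, a x /\ (z = j1 x \/ z = j2 x)) in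
  let ahat := gen_ideal (fun z => exists x, a x /\ z = tau x) in
  let J := gen_ideal (fun z => exists y, ahat y /\ (z = k1 y \/ z = k2 y)) in
  lambda_iso I J h.
Proof.
move=> I ahat J.
have [phi Hc] := complA.
have PN n := per_n noethA ida tensAA Hc tensAhAh h1 h2 n.
split.
  move=> c d _ _ Hcd n; apply: (PN n).1; rewrite rmorphB; exact: (Hcd n).
move=> e He.
pose x n := epsilon (inhabits (0 : AA)) (fun x => idpow J n (e n - h x)).
have xP n : idpow J n (e n - h (x n)).
  exact: (epsilon_spec (inhabits (0 : AA)) (fun x => idpow J n (e n - h x)) ((PN n).2 (e n))).
exists x; split.
  move=> n; apply: (PN n).1; rewrite rmorphB.
  have Jn := idpow_ideal J n.
  apply: (idcongT Jn (y := e n.+1)).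
    by apply: idcongS => //; apply: idpow_dec; apply: xP.
  by apply: (idcongT Jn (He n)); apply: xP.
move=> n; apply: idcongS; first exact: idpow_ideal.
exact: xP.
Qed.
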